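(* Let $C\subseteq\{0,1\}^m$ be a code and let $t:[m]\to\mathbb{Z}$ be any function. For $s\in\mathbb{Z}$ let $I_s=t^{-1}(s)\subseteq[m]$. For a nonzero $c\in C$ let $\mathrm{type}(c)=\max\{t(i): c_i=1\}$, and for $s\in\mathbb{Z}$ let $C_s=\{c\in C\setminus\{0\} : \mathrm{type}(c)=s\}$. Then \[ \sum_{s\in\mathbb{Z}} \mathrm{CL}\big((C_s\cup C_{s+1})|_{I_s}\big)\le 2\,\mathrm{CL}(C). \]
   Context: For $S\subseteq[m]$ and $D\subseteq\{0,1\}^m$, $D|_S=\{c|_S : c\in D\}\subseteq\{0,1\}^S$. A chain of length $\ell$ in a code $D\subseteq\{0,1\}^A$ is a pair of injective maps $a:[\ell]\to A$ and $c:[\ell]\to D$ such that $c(i)_{a(i)}=1$ for all $i$, and $c(i)_{a(j)}=0$ for all $1\le i<j\le\ell$; the chain length $\mathrm{CL}(D)$ is the maximum length of a chain in $D$ ($0$ if none exists, in particular for $D$ empty). *)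

(* Defs.v *)
From mathcomp Require Import all_boot all_order all_algebra.
Set Implicit Arguments. Unset Strict Implicit. Unset Printing Implicit Defensive.
Import Order.TTheory GRing.Theory Num.Theory.

(* Words in {0,1}^A are finite functions A -> bool (true = 1). *)
Definition word (A : finType) := {ffun A -> bool}.

Definition has_chain (A : finType) (D : {set word A}) (l : nat) : bool :=
  [exists a : {ffun 'I_l -> A}, exists c : {ffun 'I_l -> word A},
    [&& injectiveb a, injectiveb c,
        [forall i : 'I_l, c i \in D],
        [forall i : 'I_l, c i (a i)] &
        [forall i : 'I_l, forall j : 'I_l, ((i : nat) < j)%N ==> ~~ c i (a j)]]].

(* Chain length: maximal length of a chain (a chain has length <= #|A| by
   injectivity of a; length 0 is the vacuous chain, so CL = 0 if none). *)
Definition CL (A : finType) (D : {set word A}) : nat :=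
  \max_(l < #|A|.+1 | has_chain D l) l.

Definition sub_of (m : nat) (S : {set 'I_m}) : finType := {x : 'I_m | x \in S}.

Definition restr (m : nat) (S : {set 'I_m}) (D : {set word 'I_m})
  : {set word (sub_of S)} :=
  [set [ffun x : sub_of S => (c : word 'I_m) (val x)] | c in D].

Definition Iset (m : nat) (t : 'I_m -> int) (s : int) : {set 'I_m} :=
  [set i | t i == s].

(* c is nonzero and type(c) = max { t i : c_i = 1 } = s *)
Definition has_type (m : nat) (t : 'I_m -> int) (c : word 'I_m) (s : int) : bool :=
  [exists i, c i && (t i == s)] && [forall i, c i ==> (t i <= s)%R].

Definition Ctype (m : nat) (t : 'I_m -> int) (C : {set word 'I_m}) (s : int)
  : {set word 'I_m} :=
  [set c in C | has_type t c s].

(* Main.v *)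
Require Import Defs.
From mathcomp Require Import all_boot all_order all_algebra.
From mathcomp Require Import zify.
Import Order.TTheory GRing.Theory Num.Theory.
Set Implicit Arguments. Unset Strict Implicit.

Definition chain_seq (A : finType) (D : {set word A}) (s : seq (A * word A)) : bool :=
  all (fun p : A * word A => (p.2 \in D) && p.2 p.1) s && pairwise (fun p q : A * word A => ~~ p.2 q.1) s.

Lemma chain_seq_CL (A : finType) (D : {set word A}) s :
  chain_seq D s -> (size s <= CL D)%N.
Proof.
move=> /andP[Hall Hpw]; case Es: s => [//|p0 s0]; rewrite -Es.
set n := size s.
have Hij : forall i j : 'I_n, (i < j)%N -> ~~ (nth p0 s i).2 (nth p0 s j).1.
  by move=> i j Hl; apply: (pairwiseP p0 Hpw) => //; rewrite inE.
have Hii : forall i : 'I_n, ((nth p0 s i).2 \in D) && (nth p0 s i).2 (nth p0 s i).1.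
  by move=> i; apply: (all_nthP p0 Hall).
pose a := [ffun i : 'I_n => (nth p0 s i).1].
pose c := [ffun i : 'I_n => (nth p0 s i).2].
have Hne : forall i j : 'I_n, (i < j)%N -> (a i != a j) && (c i != c j).
  move=> i j Hl; move: (Hij i j Hl) (Hii i) (Hii j) => H1 /andP[_ H2] /andP[_ H3].
  rewrite !ffunE; apply/andP; split; apply/eqP=> E.
    by rewrite -E H2 in H1.
  by move: H1; rewrite E H3.
have Hinj : injectiveb a && injectiveb c.
  apply/andP; split; apply/injectiveP => i j E.
    case: (ltngtP i j) => H; last exact: ord_inj.
    - by move: (Hne i j H); rewrite E eqxx.
    - by move: (Hne j i H); rewrite E eqxx.
  case: (ltngtP i j) => H; last exact: ord_inj.
  - by move: (Hne i j H); rewrite E eqxx andbF.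
  - by move: (Hne j i H); rewrite E eqxx andbF.
have Hch : has_chain D n.
  apply/existsP; exists a; apply/existsP; exists c.
  case/andP: Hinj => -> ->; rewrite /=.
  apply/and3P; split.
  - by apply/forallP => i; rewrite ffunE; case/andP: (Hii i).
  - by apply/forallP => i; rewrite !ffunE; case/andP: (Hii i).
  - apply/forallP => i; apply/forallP => j; apply/implyP => Hl.
    by rewrite !ffunE; apply: Hij.
have Hn : (n < #|A|.+1)%N.
  case/andP: Hinj => /injectiveP Ha _.
  by move: (@leq_card _ _ _ Ha); rewrite card_ord ltnS.
rewrite /CL.
exact: (@leq_bigmax_cond _ (fun l : 'I_#|A|.+1 => has_chain D l)
   (fun l : 'I_#|A|.+1 => nat_of_ord l) (Ordinal Hn) Hch).
Qed.

Lemma enum_pw k (r : rel 'I_k) :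
  (forall i j : 'I_k, (i < j)%N -> r i j) -> pairwise r (enum 'I_k).
Proof.
move=> H; apply: (sub_pairwise (r := relpre val ltn)) => //.
rewrite -pairwise_map val_enum_ord -sorted_pairwise; last exact: ltn_trans.
exact: iota_ltn_sorted.
Qed.

Lemma has_chain_seq (A : finType) (D : {set word A}) k :
  has_chain D k -> exists s, chain_seq D s /\ size s = k.
Proof.
case/existsP=> a /existsP[c /and5P[_ _ /forallP H1 /forallP H2 /forallP H3]].
exists [seq (a i, c i) | i <- enum 'I_k]; split; last by rewrite size_map size_enum_ord.
apply/andP; split.
  by rewrite all_map; apply/allP => i _ /=; rewrite H1 H2.
rewrite pairwise_map; apply: enum_pw => i j Hl /=.
by move/forallP: (H3 i) => /(_ j) /implyP; apply.
Qed.

Lemma CL_has (A : finType) (D : {set word A}) :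
  CL D = 0%N \/ has_chain D (CL D).
Proof.
case: (pickP (fun l : 'I_#|A|.+1 => has_chain D l)) => [l Hl | H0].
  have Hc : (0 < #|[pred l : 'I_#|A|.+1 | has_chain D l]|)%N.
    by apply/card_gt0P; exists l; rewrite inE.
  case: (eq_bigmax_cond (fun l : 'I_#|A|.+1 => nat_of_ord l) Hc) => i0 Hi0 E.
  have -> : CL D = i0 by rewrite /CL -E; apply: eq_bigl => i; rewrite inE.
  by right; rewrite inE in Hi0.
by left; rewrite /CL big_pred0.
Qed.

Lemma restr_chain m (S : {set 'I_m}) (D : {set word 'I_m}) k :
  has_chain (restr S D) k ->
  exists s, [/\ chain_seq D s, size s = k & all (fun p => p.1 \in S) s].
Proof.
case/existsP=> a /existsP[c /and5P[_ _ /forallP H1 /forallP H2 /forallP H3]].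
have ex : forall i, exists d : word 'I_m, (d \in D) && (c i == [ffun x : sub_of S => d (val x)]).
  move=> i; case/imsetP: (H1 i) => d Hd E; exists d; by rewrite Hd E eqxx.
pose d i := xchoose (ex i).
have Hd : forall i, d i \in D by move=> i; case/andP: (xchooseP (ex i)).
have Hdc : forall i x, d i (val x) = c i x.
  by move=> i x; case/andP: (xchooseP (ex i)) => _ /eqP ->; rewrite ffunE.
exists [seq (val (a i), d i) | i <- enum 'I_k]; split.
- apply/andP; split.
    by rewrite all_map; apply/allP => i _ /=; rewrite Hd Hdc H2.
  rewrite pairwise_map; apply: enum_pw => i j Hl /=.
  by rewrite Hdc; move/forallP: (H3 i) => /(_ j) /implyP; apply.
- by rewrite size_map size_enum_ord.
- by rewrite all_map; apply/allP => i _ /=; exact: (valP (a i)).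
Qed.

Lemma chain_seq_sub (A : finType) (D D' : {set word A}) s :
  D \subset D' -> chain_seq D s -> chain_seq D' s.
Proof.
move=> /subsetP HD /andP[Ha Hp]; rewrite /chain_seq Hp andbT.
by apply/allP => p /(allP Ha) /andP[/HD -> ->].
Qed.

Local Open Scope ring_scope.

Definition Dx m (C : {set word 'I_m}) (t : 'I_m -> int) (x : int) :=
  restr (Iset t x) (Ctype t C x :|: Ctype t C (x + 1)).

Lemma build m (C : {set word 'I_m}) (t : 'I_m -> int) (r : seq int) (z : int) :
  sorted (fun x y => x + 2 <= y) r -> all (fun y => z <= y) r ->
  exists s, [/\ chain_seq C s, size s = (\sum_(x <- r) CL (Dx C t x))%N
                & all (fun p => z <= t p.1) s].
Proof.
elim: r z => [|x r IH] z /= Hs Hz.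
  by exists [::]; rewrite big_nil.
have Htr : transitive (fun x y : int => x + 2 <= y).
  move=> a b c H1 H2 /=; lia.
have Hr := path_sorted Hs.
have Hmin := order_path_min Htr Hs.
case/andP: Hz => Hzx Hzr.
case: (IH (x + 2) Hr Hmin) => s' [Hc' Hsz' Ha'].
have [sx' [Hcx' Hszx' Hax']] : exists s, [/\ chain_seq (Ctype t C x :|: Ctype t C (x + 1)) s,
     size s = CL (Dx C t x) & all (fun p => p.1 \in Iset t x) s].
  case: (CL_has (Dx C t x)) => [->|H]; first by exists [::].
  exact: restr_chain H.
exists (sx' ++ s'); split.
- have HC : Ctype t C x :|: Ctype t C (x + 1) \subset C.
    by apply/subsetP => w; rewrite !inE => /orP[] /andP[].
  case/andP: (chain_seq_sub HC Hcx') => Hx1 Hx2.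
  case/andP: Hc' => Hy1 Hy2.
  case/andP: Hcx' => Hz1 _.
  rewrite /chain_seq all_cat pairwise_cat Hx1 Hy1 Hx2 Hy2 /= andbT.
  apply/allrelP => p q Hp Hq /=.
  case/andP: (allP Hz1 p Hp); rewrite !inE => Hpt _.
  have Hq1 := allP Ha' q Hq; simpl in Hq1.
  apply/negP => Hpq.
  have Hle : t q.1 <= x + 1.
    case/orP: Hpt => /andP[_ /andP[_ /forallP /(_ q.1) /implyP /(_ Hpq)]] H;
      move: H Hq1; clear; move: (t q.1) => u; lia.
  move: Hle Hq1; clear; move: (t q.1) => u; lia.
- by rewrite size_cat Hszx' Hsz' big_cons.
- rewrite all_cat; apply/andP; split.
    apply/allP => p /(allP Hax'); rewrite inE => /eqP ->; exact: Hzx.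
  apply/allP => p /(allP Ha') /= H; move: H Hzx; clear; move: (t p.1) => u; lia.
Qed.

Lemma build2 m (C : {set word 'I_m}) (t : 'I_m -> int) (r : seq int) :
  sorted (fun x y => x + 2 <= y) r ->
  (\sum_(x <- r) CL (Dx C t x) <= CL C)%N.
Proof.
move=> Hs.
have Hz : all (fun y => head 0 r <= y) r.
  case: r Hs => [//|x r] /= Hs; rewrite lexx /=.
  apply: sub_all (order_path_min _ Hs) => [y /= H|]; first lia.
  move=> a b c H1 H2 /=; lia.
case: (build C t Hs Hz) => s [Hc <- _].
exact: chain_seq_CL.
Qed.

Theorem mainTheorem9 (m : nat) (C : {set word 'I_m}) (t : 'I_m -> int) :
  (\sum_(s <- undup [seq t i | i <- enum 'I_m])
      CL (restr (Iset t s) (Ctype t C s :|: Ctype t C (s + 1)%R)) <= 2 * CL C)%N.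
Proof.
set T := undup _.
have -> : (\sum_(s <- T)
      CL (restr (Iset t s) (Ctype t C s :|: Ctype t C (s + 1)%R)))%N
    = (\sum_(s <- sort <=%O T) CL (Dx C t s))%N.
  by apply: perm_big; rewrite perm_sym perm_sort.
have Hlt : sorted <%O (sort <=%O T).
  by rewrite lt_sorted_uniq_le sort_uniq undup_uniq sort_sorted //; exact: le_total.
rewrite (bigID (fun x : int => (x %% 2)%Z == 0)) /=.
rewrite -(big_filter _ (fun x : int => (x %% 2)%Z == 0)).
rewrite -(big_filter _ (fun x : int => (x %% 2)%Z != 0)).
rewrite mul2n -addnn.
apply: leq_add; apply: build2.
- apply: (sub_in_sorted (e := <%R) (P := fun x : int => (x %% 2)%Z == 0)).
  + move=> a b /eqP Ha /eqP Hb /= H; lia.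
  + by apply/allP => x; rewrite mem_filter => /andP[].
  + exact: sorted_filter (@lt_trans _ _) _ _ Hlt.
- apply: (sub_in_sorted (e := <%R) (P := fun x : int => (x %% 2)%Z != 0)).
  + move=> a b /eqP Ha /eqP Hb /= H; lia.
  + by apply/allP => x; rewrite mem_filter => /andP[].
  + exact: sorted_filter (@lt_trans _ _) _ _ Hlt.
Qed.
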